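(* Let $R$ be a finite semiring with $0$ and $1$, let $M\in\mathrm{Mat}_m(R)$, and suppose the preperiod $\mathrm{pr}(M)$ exists. Let $n\ge1$, let $b_0,\dots,b_{n-1}\in\mathbb{N}$ be such that the integer circulant matrix $B=\mathrm{Circ}(b_0,\dots,b_{n-1})$ satisfies $\det(B)\neq 0$, and let $v=(M^{b_0},\dots,M^{b_{n-1}})$. Let $A=\mathrm{Circ}(a_0,\dots,a_{n-1})\in\mathrm{Circ}_n(\mathbb{N})$ satisfy $$\sum_{i=0}^{n-1} a_i\, b_{i+k}\le \mathrm{pr}(M)-1\quad\text{for every }k=0,\dots,n-1$$ (indices modulo $n$). Then for $X\in\mathrm{Circ}_n(\mathbb{N})$, $Xv=Av$ holds if and only if $X=A$.
   Context: $\mathrm{Circ}(c_0,\dots,c_{n-1})$ denotes the $n\times n$ matrix with $(i,j)$ entry $c_{(i-j)\bmod n}$ ($0\le i,j\le n-1$), and $\mathrm{Circ}_n(\mathbb{N})$ is the set of such matrices with entries in $\mathbb{N}=\{0,1,2,\dots\}$. For $C=\mathrm{Circ}(c_0,\dots,c_{n-1})\in\mathrm{Circ}_n(\mathbb{N})$ and a tuple $w=(w_0,\dots,w_{n-1})$ of pairwise commuting elements of a monoid, $Cw$ is the tuple with $(Cw)_i=\prod_{j=0}^{n-1} w_j^{\,c_{j-i}}$ (indices mod $n$, $w^0$ the identity); here the entries of $v$ are powers of $M$, hence commute. A semiring is a set with two associative operations $+,\cdot$, $\cdot$ distributing over $+$ on both sides; $R$ is additively commutative with $0$ and $1$. For $g$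 in a finite monoid, the preperiod $\mathrm{pr}(g)$ is the largest non-negative integer $m$ such that $g^k\neq g^m$ for all $k>m$ (exponents in $\mathbb{N}$); ''exists'' means such an $m$ exists. *)

(* Defs.v *)
From mathcomp Require Import all_boot all_order all_algebra.
Set Implicit Arguments. Unset Strict Implicit. Unset Printing Implicit Defensive.
Import GRing.Theory.

Definition circ (n : nat) (c : n.-tuple nat) : 'M[nat]_n :=
  \matrix_(i < n, j < n) nth 0%N c ((i + n - j) %% n).

(* Action of a nat-matrix C on a tuple w of (commuting) elements of a
   semiring:  (C w)_i = prod_j w_j ^ (C j i)  (= w_j^{c_{j-i}} for C circulant). *)
Definition circ_act (S : pzSemiRingType) (n : nat) (C : 'M[nat]_n)
  (w : 'I_n -> S) : {ffun 'I_n -> S} :=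
  [ffun i => (\prod_(j < n) (w j) ^+ (C j i))%R].

Definition is_preperiod (S : pzSemiRingType) (g : S) (p : nat) : Prop :=
  (forall k, (p < k)%N -> (g ^+ k)%R <> (g ^+ p)%R) /\
  (forall q, (forall k, (q < k)%N -> (g ^+ k)%R <> (g ^+ q)%R) -> (q <= p)%N).

(* Main.v *)
Require Import Defs.
From mathcomp Require Import all_boot all_order all_algebra zify.
Import GRing.Theory.

Lemma modsmall2 u n : (u < n + n)%N -> u %% n = if (u < n)%N then u else u - n.
Proof.
move=> ht; case: ltnP => h; first by rewrite modn_small.
idtac.
rewrite -{1}(subnK h) modnDr modn_small //; lia.
Qed.

Lemma fact1 n j r : (j < n)%N -> (r < n)%N -> ((j + r) %% n + n - r) %% n = j.
Proof.
move=> hj hr; rewrite (modsmall2 (j+r) n); last lia.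
case: ifP => h; rewrite modsmall2; try (case: ifP; lia); lia.
Qed.

Lemma fact2 n j k r : (j < n)%N -> (k < n)%N -> (r < n)%N ->
  ((j + r) %% n + n - k) %% n = (j + n - (k + n - r) %% n) %% n.
Proof.
move=> hj hk hr; rewrite (modsmall2 (j+r) n); last lia.
rewrite (modsmall2 (k+n-r) n); last lia.
case: ifP => h1; case: ifP => h2; rewrite !modsmall2; try (repeat case: ifP); lia.
Qed.

Lemma big_shift (R:Type) (idx:R) (op : Monoid.com_law idx) n (Hn:(0<n)%N) s (Hs: (s<n)%N) (F:nat->R) :
  \big[op/idx]_(j<n) F j = \big[op/idx]_(j<n) F ((j+s)%%n).
Proof.
pose h (j : 'I_n) : 'I_n := Ordinal (ltn_pmod (j+s) Hn).
rewrite (reindex_inj (h := h)) //.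
move=> j k /(congr1 val) /=; have := ltn_ord j; have := ltn_ord k => hk hj.
rewrite (modsmall2 (j + s) n); last lia.
rewrite (modsmall2 (k + s) n); last lia.
move=> e; apply: val_inj => /=; move: e; repeat case: ifP; lia.
Qed.

Lemma act_exp (S : pzSemiRingType) n (M:S) (b c : n.-tuple nat) i :
  circ_act (circ c) (fun j => M ^+ nth 0%N b j)%R i =
  (M ^+ (\sum_(j<n) nth 0%N b j * nth 0%N c ((j + n - i) %% n)))%R.
Proof.
rewrite ffunE (big_morph (fun k => M ^+ k)%R (exprD M) (expr0 M)).
by apply: eq_bigr => j _; rewrite mxE exprM.
Qed.

Lemma pre_inj (S : pzSemiRingType) (g:S) pr e f : is_preperiod g pr -> (e <= pr)%N ->
  (g ^+ f = g ^+ e)%R -> f = e.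
Proof.
move=> [H1 _] hle.
have key : forall e k, (e <= pr)%N -> (e < k)%N -> (g ^+ k <> g ^+ e)%R.
  move=> e' k he hk E; apply: (H1 (k + (pr - e'))); first lia.
  by rewrite exprD E -exprD subnKC.
move=> E; case: (ltngtP f e) => h //.
- by exfalso; apply: (key f e) => //; lia.
- by exfalso; apply: (key e f).
Qed.

Theorem mainTheorem6 (R : finPzSemiRingType) (m : nat) (M : 'M[R]_m)
  (pr : nat) (Hpr : is_preperiod M pr)
  (n : nat) (Hn : (1 <= n)%N) (b : n.-tuple nat)
  (HdetB : (\det (map_mx (fun x : nat => x%:Z) (circ b)) != 0)%R)
  (a : n.-tuple nat)
  (Ha : forall k : 'I_n,
      ((\sum_(i < n) nth 0%N a i * nth 0%N b ((i + k) %% n)) + 1 <= pr)%N) :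
  let v : 'I_n -> 'M[R]_m := fun j => (M ^+ nth 0%N b j)%R in
  forall x : n.-tuple nat,
    circ_act (circ x) v = circ_act (circ a) v <-> circ x = circ a.
Proof.
move=> v x; split; last by move=> ->.
move=> H.
have He : forall i : 'I_n, (\sum_(j<n) nth 0%N b j * nth 0%N x ((j + n - i) %% n))%N
   = (\sum_(j<n) nth 0%N b j * nth 0%N a ((j + n - i) %% n))%N.
  move=> i; have := congr1 (fun f : {ffun _ -> _} => f i) H; rewrite /v !act_exp => Hi.
  apply: (@pre_inj _ _ _ _ _ Hpr _ Hi).
  rewrite (big_shift _ _ _ _ Hn _ (ltn_ord i) (fun j => nth 0%N b j * nth 0%N a ((j + n - i) %% n))%N).
  have := Ha i; set s1 := bigop _ _ _ => Hs; set s2 := bigop _ _ _.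
  suff -> : s2 = s1 by lia.
  rewrite /s1 /s2; apply: eq_bigr => j _.
  by rewrite fact1 // mulnC.
pose y (l : nat) : int :=  (Posz (nth 0%N x l) - Posz (nth 0%N a l))%R.
pose Bt := trmx (map_mx (fun x : nat => Posz x) (circ b)).
pose Y : 'M[int]_n := (\matrix_(j, k) y ((j + n - k) %% n)%N)%R.
have HBY : (Bt *m Y = 0)%R.
  apply/matrixP => r k; rewrite !mxE.
  under eq_bigr do rewrite !mxE.
  rewrite (big_shift _ _ _ _ Hn _ (ltn_ord r) (fun j => Posz (nth 0%N b ((j + n - r) %% n)%N) * y ((j + n - k) %% n)%N)%R).
  pose i : 'I_n := Ordinal (ltn_pmod (k + n - r) Hn).
  have := congr1 Posz (He i).
  rewrite !(big_morph Posz PoszD (erefl (Posz 0))) => /eqP.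
  rewrite -subr_eq0 -sumrB => /eqP E; apply: (etrans _ E).
  apply: eq_bigr => j _.
  rewrite fact1 // /y /i /= fact2 // mulrBr !PoszM //.
have HdY : (\det Bt *: Y = 0)%R.
  by rewrite -mul_scalar_mx -mul_adj_mx -mulmxA HBY mulmx0.
apply/matrixP => i j; rewrite !mxE.
suff : forall l, (l < n)%N -> nth 0%N x l = nth 0%N a l.
  by move=> Hl; rewrite !Hl // ltn_pmod.
move=> l hl.
have := congr1 (fun A : 'M[int]_n => A (Ordinal hl) (Ordinal Hn)) HdY.
rewrite !mxE /= subn0 modnDr modn_small // => /eqP.
rewrite mulf_eq0 /Bt det_tr (negbTE HdetB) /= /y subr_eq0 => /eqP [].
done.
Qed.
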